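(* Fix $n\ge 1$ and let $x\in\mathcal{NM}_n$. Then $\chi^+(x)$ equals the number of minimal idempotent join-irreducible elements $g\in\mathcal{NM}_n$ such that $g\le x$.
   Context: An NM algebra is an algebra $\langle A,\wedge,\vee,\odot,\to,\bot,\top\rangle$ such that $(A,\wedge,\vee,\bot,\top)$ is a bounded lattice, $\langle A,\odot,\top\rangle$ is a commutative monoid, and for all $x,y,z$: $x\odot y\le z$ iff $x\le y\to z$; $(x\to y)\vee(y\to x)=\top$; $\neg(x\odot y)\vee((x\wedge y)\to(x\odot y))=\top$ where $\neg x:=x\to\bot$; and $\neg\neg x=x$. $\mathcal{NM}_n$ denotes the free NM algebra on $n$ generators, i.e. the Lindenbaum algebra of formulas of Nilpotent Minimum logic in the variables $x_1,\dots,x_n$ modulo logical equivalence; equivalently, the subalgebra of $[0,1]^{[0,1]^n}$ generated by the coordinate projections, where $[0,1]$ carries the standard NM operations ($\wedge=\min$, $\vee=\max$, $x\odot y=\min(x,y)$ if $x+y>1$ and $0$ otherwise, $x\to y=1$ if $x\le y$ and $\max(1-x,y)$ otherwise). It is a finite distributive lattice. A valuation on a distributive lattice $L$ is a map $\nu:L\to\mathbb{R}$ with $\nu(x)+\nu(y)=\nu(x\vee y)+\nu(x\wedge y)$ for all $x,y$; on a finite distributive lattice a valuation is uniquely determined by its values on join-irreducible elements and on $\bot$. An element is join-irreducible if it is not $\bot$ and $x=y\vee z$ implies $x=y$ or $x=z$. An element $g$ is idempotent if $g\odot g=g$; a minimal idempotent join-irreducible element is one that is minimal (in the lattice order) among the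 idempotent join-irreducible elements. The idempotent Euler characteristic $\chi^+:\mathcal{NM}_n\to\mathbb{R}$ is the unique valuation with $\chi^+(\bot)=0$ and, for each join-irreducible $g$, $\chi^+(g)=1$ if $g\odot g=g$ and $\chi^+(g)=0$ otherwise. *)

(* Defs.v *)
From Stdlib Require Import Reals List.
Open Scope R_scope.

Definition nm_and (x y : R) : R := Rmin x y.
Definition nm_or (x y : R) : R := Rmax x y.
Definition nm_prod (x y : R) : R :=
  if Rlt_dec 1 (x + y) then Rmin x y else 0.
Definition nm_imp (x y : R) : R :=
  if Rle_dec x y then 1 else Rmax (1 - x) y.

Inductive form : Type :=
  | FVar : nat -> form
  | FBot : form
  | FTop : form
  | FAnd : form -> form -> form
  | FOr : form -> form -> form
  | FProd : form -> form -> form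
  | FImp : form -> form -> form.

Fixpoint vars_lt (n : nat) (f : form) : Prop :=
  match f with
  | FVar i => (i < n)%nat
  | FBot | FTop => True
  | FAnd a b | FOr a b | FProd a b | FImp a b => vars_lt n a /\ vars_lt n b
  end.

Fixpoint eval (v : nat -> R) (f : form) : R :=
  match f with
  | FVar i => v i
  | FBot => 0
  | FTop => 1
  | FAnd a b => nm_and (eval v a) (eval v b)
  | FOr a b => nm_or (eval v a) (eval v b)
  | FProd a b => nm_prod (eval v a) (eval v b)
  | FImp a b => nm_imp (eval v a) (eval v b)
  end.

(** Points of the cube [0,1]^n, encoded as nat-indexed sequences that are
    in [0,1] on coordinates < n and 0 elsewhere (a bijective encoding). *)
Definition pt (n : nat) : Type :=
  { v : nat -> R | forall i, ((i < n)%nat -> 0 <= v i <= 1) /\ ((n <= i)%nat -> v i = 0) }.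

(** Membership in the subalgebra of [0,1]^([0,1]^n) generated by the projections. *)
Definition in_NM (n : nat) (f : pt n -> R) : Prop :=
  exists phi : form, vars_lt n phi /\ f = (fun p => eval (proj1_sig p) phi).

Record NM (n : nat) : Type := mkNM { nmf : pt n -> R; nm_in : in_NM n nmf }.
Arguments mkNM {n} nmf nm_in.
Arguments nmf {n} _ _.



Lemma in_NM_bot (n : nat) : in_NM n (fun _ => 0).
Proof. exists FBot; split; [exact I | reflexivity]. Qed.
Lemma in_NM_top (n : nat) : in_NM n (fun _ => 1).
Proof. exists FTop; split; [exact I | reflexivity]. Qed.
Lemma in_NM_and (n : nat) (f g : pt n -> R) :
  in_NM n f -> in_NM n g -> in_NM n (fun p => nm_and (f p) (g p)).
Proof. intros [a [Ha ->]] [b [Hb ->]]; exists (FAnd a b); split; [split; assumption | reflexivity]. Qed.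
Lemma in_NM_or (n : nat) (f g : pt n -> R) :
  in_NM n f -> in_NM n g -> in_NM n (fun p => nm_or (f p) (g p)).
Proof. intros [a [Ha ->]] [b [Hb ->]]; exists (FOr a b); split; [split; assumption | reflexivity]. Qed.
Lemma in_NM_prod (n : nat) (f g : pt n -> R) :
  in_NM n f -> in_NM n g -> in_NM n (fun p => nm_prod (f p) (g p)).
Proof. intros [a [Ha ->]] [b [Hb ->]]; exists (FProd a b); split; [split; assumption | reflexivity]. Qed.

Definition NM_bot (n : nat) : NM n := mkNM (fun _ => 0) (in_NM_bot n).
Definition NM_top (n : nat) : NM n := mkNM (fun _ => 1) (in_NM_top n).
Definition NM_meet {n : nat} (x y : NM n) : NM n :=
  mkNM (fun p => nm_and (nmf x p) (nmf y p)) (in_NM_and n _ _ (nm_in n x) (nm_in n y)).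
Definition NM_join {n : nat} (x y : NM n) : NM n :=
  mkNM (fun p => nm_or (nmf x p) (nmf y p)) (in_NM_or n _ _ (nm_in n x) (nm_in n y)).
Definition NM_prod {n : nat} (x y : NM n) : NM n :=
  mkNM (fun p => nm_prod (nmf x p) (nmf y p)) (in_NM_prod n _ _ (nm_in n x) (nm_in n y)).

Definition NM_le {n : nat} (x y : NM n) : Prop := NM_meet x y = x.

Definition join_irreducible {n : nat} (x : NM n) : Prop :=
  x <> NM_bot n /\ forall y z : NM n, x = NM_join y z -> x = y \/ x = z.

Definition idempotent {n : nat} (g : NM n) : Prop := NM_prod g g = g.

Definition idem_ji {n : nat} (g : NM n) : Prop := idempotent g /\ join_irreducible g.

Definition min_idem_ji {n : nat} (g : NM n) : Prop :=
  idem_ji g /\ forall h : NM n, idem_ji h -> NM_le h g -> h = g.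

Definition valuation {n : nat} (nu : NM n -> R) : Prop :=
  forall x y : NM n, nu x + nu y = nu (NM_join x y) + nu (NM_meet x y).

(** [chi] is the idempotent Euler characteristic chi^+ of NM_n
    (the unique valuation with these values). *)
Definition is_chi_plus {n : nat} (chi : NM n -> R) : Prop :=
  valuation chi /\ chi (NM_bot n) = 0 /\
  forall g : NM n, join_irreducible g ->
    (idempotent g -> chi g = 1) /\ (~ idempotent g -> chi g = 0).

(* Main.v *)
Require Import Defs.
From Stdlib Require Import Reals List Lra Lia Arith.
From Stdlib Require Import Classical ClassicalEpsilon FunctionalExtensionality ProofIrrelevance.
Open Scope R_scope.
Import ListNotations.

Ltac rcase := repeat match goal with
  | |- context[Rle_dec ?a ?b] => destruct (Rle_dec a b)
  | |- context[Rlt_dec ?a ?b] => destruct (Rlt_dec a b)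
  | H: context[Rle_dec ?a ?b] |- _ => destruct (Rle_dec a b)
  | H: context[Rlt_dec ?a ?b] |- _ => destruct (Rlt_dec a b)
  end; try lra.

Ltac nat_bools := repeat match goal with
  | |- context[(?a =? ?b)%nat] => first [rewrite (proj2 (Nat.eqb_eq a b)) by lia | rewrite (proj2 (Nat.eqb_neq a b)) by lia]
  | |- context[(?a <? ?b)%nat] => first [rewrite (proj2 (Nat.ltb_lt a b)) by lia | rewrite (proj2 (Nat.ltb_ge a b)) by lia]
  end.

Lemma NM_ext n (x y : NM n) : nmf x = nmf y -> x = y.
Proof. destruct x as [fx hx], y as [fy hy]; simpl; intros ->; f_equal; apply proof_irrelevance. Qed.

Definition NN (n : nat) : nat := (2*n+2)%nat.
Definition term n (t : nat) (v : nat -> R) : R :=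
  if (t =? 0)%nat then 0 else if (t =? 1)%nat then 1 else
  if (t <? 2+n)%nat then v (t-2)%nat else 1 - v (t-2-n)%nat.
Definition negt n t := if (t =? 0)%nat then 1%nat else if (t =? 1)%nat then 0%nat
  else if (t <? 2+n)%nat then (t+n)%nat else (t-n)%nat.

Lemma negt_ok n t v : (t < NN n)%nat -> (negt n t < NN n)%nat /\ term n (negt n t) v = 1 - term n t v.
Proof.
  intros H; unfold NN in *.
  destruct (Nat.lt_ge_cases t 2) as [H2|H2].
  - destruct (Nat.eqb_spec t 0) as [->|H0].
    + unfold negt, term; simpl; split; [lia|ring].
    + assert (t = 1%nat) by lia; subst; unfold negt, term; simpl; split; [lia|ring].
  - destruct (Nat.lt_ge_cases t (2+n)) as [H3|H3].
    + unfold negt; nat_bools. unfold term; nat_bools. split; [lia|].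
      replace (t+n-2-n)%nat with (t-2)%nat by lia. ring.
    + unfold negt; nat_bools. unfold term; nat_bools. split; [lia|].
      replace (t-n-2)%nat with (t-2-n)%nat by lia. ring.
Qed.

Lemma term0 n v : term n 0 v = 0. Proof. reflexivity. Qed.
Lemma term1 n v : term n 1 v = 1. Proof. reflexivity. Qed.

Definition leb_R (a b : R) : bool := if Rle_dec a b then true else false.
Definition otl n (v : nat -> R) : list bool :=
  map (fun k => leb_R (term n (k / NN n) v) (term n (k mod NN n) v)) (seq 0 (NN n * NN n)).
Definition look n (l : list bool) s t := nth (s * NN n + t) l false.

Lemma look_otl n v s t : (s < NN n)%nat -> (t < NN n)%nat ->
  look n (otl n v) s t = leb_R (term n s v) (term n t v).
Proof.
  intros Hs Ht. unfold look, otl.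
  assert (Hk : (s * NN n + t < NN n * NN n)%nat) by nia.
  set (f := fun k => leb_R (term n (k / NN n) v) (term n (k mod NN n) v)).
  rewrite nth_indep with (d' := f 0%nat) by (rewrite length_map, length_seq; lia).
  rewrite map_nth, seq_nth by lia. unfold f. simpl.
  rewrite <- (Nat.div_unique (s * NN n + t) (NN n) s t) by lia.
  rewrite <- (Nat.mod_unique (s * NN n + t) (NN n) s t) by lia.
  reflexivity.
Qed.

Lemma eval_code n phi : vars_lt n phi -> exists F : list bool -> nat,
  (forall l, F l < NN n)%nat /\ forall v, eval v phi = term n (F (otl n v)) v.
Proof.
  induction phi; simpl; intros Hv.
  - exists (fun _ => (2+n0)%nat); split; [intros; unfold NN; lia|].
    intros v; unfold term; nat_bools. f_equal; lia.
  - exists (fun _ => 0%nat); split; [intros; unfold NN; lia| reflexivity].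
  - exists (fun _ => 1%nat); split; [intros; unfold NN; lia| reflexivity].
  - destruct Hv as [Ha Hb]; destruct (IHphi1 Ha) as [Fa [Ba Ea]]; destruct (IHphi2 Hb) as [Fb [Bb Eb]].
    exists (fun l => if look n l (Fa l) (Fb l) then Fa l else Fb l); split.
    + intros l; destruct look; auto.
    + intros v; rewrite Ea, Eb, look_otl by auto; unfold nm_and, Rmin, leb_R; rcase; reflexivity.
  - destruct Hv as [Ha Hb]; destruct (IHphi1 Ha) as [Fa [Ba Ea]]; destruct (IHphi2 Hb) as [Fb [Bb Eb]].
    exists (fun l => if look n l (Fa l) (Fb l) then Fb l else Fa l); split.
    + intros l; destruct look; auto.
    + intros v; rewrite Ea, Eb, look_otl by auto; unfold nm_or, Rmax, leb_R; rcase; reflexivity.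
  - destruct Hv as [Ha Hb]; destruct (IHphi1 Ha) as [Fa [Ba Ea]]; destruct (IHphi2 Hb) as [Fb [Bb Eb]].
    exists (fun l => if look n l (Fb l) (negt n (Fa l)) then 0%nat
                     else if look n l (Fa l) (Fb l) then Fa l else Fb l); split.
    + intros l; destruct look; [unfold NN; lia|destruct look; auto].
    + intros v; rewrite Ea, Eb.
      rewrite look_otl by (auto; apply (proj1 (negt_ok n _ (fun _ => 0) (Ba _)))).
      rewrite look_otl by auto.
      rewrite (proj2 (negt_ok n _ v (Ba _))).
      unfold nm_prod, Rmin, leb_R; rcase; rewrite ?term0; lra.
  - destruct Hv as [Ha Hb]; destruct (IHphi1 Ha) as [Fa [Ba Ea]]; destruct (IHphi2 Hb) as [Fb [Bb Eb]].
    exists (fun l => if look n l (Fa l) (Fb l) then 1%nat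
                     else if look n l (negt n (Fa l)) (Fb l) then Fb l else negt n (Fa l)); split.
    + intros l; destruct look; [unfold NN; lia|destruct look; auto; apply (proj1 (negt_ok n _ (fun _ => 0) (Ba l)))].
    + intros v; rewrite Ea, Eb.
      rewrite (look_otl n v (negt n _)) by (auto; apply (proj1 (negt_ok n _ (fun _ => 0) (Ba _)))).
      rewrite look_otl by auto.
      rewrite (proj2 (negt_ok n _ v (Ba _))).
      unfold nm_imp, Rmax, leb_R; rcase; rewrite ?term1, ?(proj2 (negt_ok n _ v (Ba _))); lra.
Qed.

Lemma NM_code n (x : NM n) : {F : list bool -> nat | (forall l, F l < NN n)%nat /\
  forall p, nmf x p = term n (F (otl n (proj1_sig p))) (proj1_sig p)}.
Proof.
  apply constructive_indefinite_description.
  destruct (nm_in n x) as [phi [Hv Hx]].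
  destruct (eval_code n phi Hv) as [F [HF1 HF2]].
  exists F; split; auto. intros p; rewrite Hx; apply HF2.
Qed.

Fixpoint all_lists {A : Type} (ch : list A) (K : nat) : list (list A) :=
  match K with
  | O => [[]]
  | S K => flat_map (fun a => map (cons a) (all_lists ch K)) ch
  end.

Lemma all_lists_in {A : Type} (ch : list A) (c : list A) :
  (forall a, In a c -> In a ch) -> In c (all_lists ch (length c)).
Proof.
  induction c as [|a c IH]; intros H; simpl; [left; reflexivity|].
  apply in_flat_map; exists a; split; [apply H; left; reflexivity|].
  apply in_map; apply IH; intros b Hb; apply H; right; exact Hb.
Qed.

Definition codeL n (x : NM n) : list nat :=
  map (proj1_sig (NM_code n x)) (all_lists [true; false] (NN n * NN n)).

Lemma map_eq_in {A B : Type} (f g : A -> B) (L : list A) a :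
  map f L = map g L -> In a L -> f a = g a.
Proof.
  induction L as [|b L IH]; simpl; [tauto|].
  intros H [<-|Ha]; injection H; intros; auto.
Qed.

Lemma otl_in n v : In (otl n v) (all_lists [true; false] (NN n * NN n)).
Proof.
  replace (NN n * NN n)%nat with (length (otl n v)) by (unfold otl; rewrite length_map, length_seq; reflexivity).
  apply all_lists_in. intros [|] _; simpl; auto.
Qed.

Lemma code_inj n (x y : NM n) : codeL n x = codeL n y -> x = y.
Proof.
  unfold codeL; intros H. apply NM_ext; extensionality p.
  destruct (NM_code n x) as [Fx [Bx Hx]], (NM_code n y) as [Fy [By Hy]]. simpl in H.
  rewrite Hx, Hy. f_equal. apply (map_eq_in _ _ _ _ H). apply otl_in.
Qed.

Definition Lc n : nat := length (all_lists [true; false] (NN n * NN n)).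

Lemma code_range n (x : NM n) : In (codeL n x) (all_lists (seq 0 (NN n)) (Lc n)).
Proof.
  replace (Lc n) with (length (codeL n x)) by (unfold codeL, Lc; rewrite length_map; reflexivity).
  apply all_lists_in. intros a Ha. unfold codeL in Ha.
  destruct (NM_code n x) as [F [B HH]]; simpl in Ha.
  apply in_map_iff in Ha. destruct Ha as [l [Hl _]]. rewrite <- Hl. apply in_seq. specialize (B l); lia.
Qed.

Definition UU n : list (NM n) :=
  map (fun c => epsilon (inhabits (NM_bot n)) (fun x => codeL n x = c)) (all_lists (seq 0 (NN n)) (Lc n)).

Lemma in_UU n x : In x (UU n).
Proof.
  unfold UU; apply in_map_iff; exists (codeL n x); split; [|apply code_range].
  apply code_inj. apply (epsilon_spec (inhabits _) (fun y => codeL n y = codeL n x)).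
  exists x; reflexivity.
Qed.

Lemma le_pw n (a b : NM n) : NM_le a b <-> forall p, nmf a p <= nmf b p.
Proof.
  split.
  - intros H p. pose proof (f_equal (fun z => nmf z p) H) as E; simpl in E.
    unfold nm_and, Rmin in E; rcase.
  - intros H. apply NM_ext; extensionality p; simpl. specialize (H p).
    unfold nm_and, Rmin; rcase; reflexivity.
Qed.

Lemma le_refl n (a : NM n) : NM_le a a.
Proof. apply le_pw; intros; lra. Qed.
Lemma le_trans n (a b c : NM n) : NM_le a b -> NM_le b c -> NM_le a c.
Proof. rewrite !le_pw; intros H1 H2 p; specialize (H1 p); specialize (H2 p); lra. Qed.
Lemma le_antisym n (a b : NM n) : NM_le a b -> NM_le b a -> a = b.
Proof. rewrite !le_pw; intros H1 H2; apply NM_ext; extensionality p; apply Rle_antisym; auto. Qed.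

Definition lt_NM n (a b : NM n) : Prop := NM_le a b /\ a <> b.

Lemma lt_trans n (a b c : NM n) : lt_NM n a b -> lt_NM n b c -> lt_NM n a c.
Proof.
  intros [H1 N1] [H2 N2]; split; [eapply le_trans; eauto|].
  intros ->. apply N2. apply le_antisym; auto.
Qed.

Lemma filter_le {A : Type} (f g : A -> bool) l : (forall a, f a = true -> g a = true) ->
  (length (filter f l) <= length (filter g l))%nat.
Proof.
  intros H; induction l as [|a l IH]; simpl; [lia|].
  destruct (f a) eqn:E1; [rewrite (H a E1); simpl; lia|destruct (g a); simpl; lia].
Qed.

Lemma filter_lt {A : Type} (f g : A -> bool) l b : (forall a, f a = true -> g a = true) ->
  In b l -> f b = false -> g b = true -> (length (filter f l) < length (filter g l))%nat.
Proof.
  intros H; induction l as [|a l IH]; simpl; [tauto|].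
  intros [->|Hb] Hf Hg.
  - rewrite Hf, Hg; simpl. pose proof (filter_le f g l H); lia.
  - specialize (IH Hb Hf Hg).
    destruct (f a) eqn:E1; [rewrite (H a E1); simpl; lia|destruct (g a); simpl; lia].
Qed.

Definition msr n (x : NM n) : nat :=
  length (filter (fun y => if excluded_middle_informative (lt_NM n y x) then true else false) (UU n)).

Lemma NM_ind n (P : NM n -> Prop) :
  (forall x, (forall y, lt_NM n y x -> P y) -> P x) -> forall x, P x.
Proof.
  intros H.
  assert (K : forall k x, (msr n x < k)%nat -> P x).
  { induction k as [|k IH]; intros x Hx; [lia|]. apply H; intros y Hy. apply IH.
    assert (msr n y < msr n x)%nat; [|lia].
    unfold msr. apply filter_lt with (b := y).
    - intros a. destruct (excluded_middle_informative (lt_NM n a y)) as [Ha|]; [|discriminate].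
      destruct (excluded_middle_informative (lt_NM n a x)) as [|Hn]; auto.
      exfalso; apply Hn; eapply lt_trans; eauto.
    - apply in_UU.
    - destruct (excluded_middle_informative (lt_NM n y y)) as [[_ Hc]|]; auto. exfalso; auto.
    - destruct (excluded_middle_informative (lt_NM n y x)); auto. }
  intros x; apply (K (S (msr n x))); lia.
Qed.

Lemma nmf_01 n (x : NM n) p : 0 <= nmf x p <= 1.
Proof.
  destruct (nm_in n x) as [phi [Hv Hx]]. rewrite Hx.
  destruct p as [v Hp]; simpl. clear Hx.
  induction phi; simpl in *.
  - apply (proj1 (Hp n0)); auto.
  - lra.
  - lra.
  - destruct Hv as [Ha Hb]; specialize (IHphi1 Ha); specialize (IHphi2 Hb); unfold nm_and, Rmin; rcase.
  - destruct Hv as [Ha Hb]; specialize (IHphi1 Ha); specialize (IHphi2 Hb); unfold nm_or, Rmax; rcase.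
  - destruct Hv as [Ha Hb]; specialize (IHphi1 Ha); specialize (IHphi2 Hb); unfold nm_prod, Rmin; rcase.
  - destruct Hv as [Ha Hb]; specialize (IHphi1 Ha); specialize (IHphi2 Hb); unfold nm_imp, Rmax; rcase.
Qed.

Lemma in_NM_imp (n : nat) (f g : pt n -> R) :
  in_NM n f -> in_NM n g -> in_NM n (fun p => nm_imp (f p) (g p)).
Proof. intros [a [Ha ->]] [b [Hb ->]]; exists (FImp a b); split; [split; assumption | reflexivity]. Qed.
Definition NM_imp' {n : nat} (x y : NM n) : NM n :=
  mkNM (fun p => nm_imp (nmf x p) (nmf y p)) (in_NM_imp n _ _ (nm_in n x) (nm_in n y)).

Lemma ji_prime n (g y z : NM n) : join_irreducible g -> NM_le g (NM_join y z) -> NM_le g y \/ NM_le g z.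
Proof.
  intros [_ Hj] Hle. rewrite le_pw in Hle.
  assert (E : g = NM_join (NM_meet g y) (NM_meet g z)).
  { apply NM_ext; extensionality p; simpl. specialize (Hle p); simpl in Hle.
    unfold nm_or, nm_and, Rmax, Rmin in *; rcase. }
  destruct (Hj _ _ E) as [E1|E1]; [left|right]; unfold NM_le; symmetry; exact E1.
Qed.

Lemma S1 n (g h : NM n) : join_irreducible g -> ~ idempotent g -> idem_ji h -> NM_le h g -> False.
Proof.
  intros [_ Hj] Hng [Hh [Hhb _]] Hle.
  assert (E : g = NM_join (NM_prod g g) (NM_meet g (NM_imp' g (NM_bot n)))).
  { apply NM_ext; extensionality p; simpl. pose proof (nmf_01 n g p).
    unfold nm_or, nm_and, nm_prod, nm_imp, Rmax, Rmin; rcase. }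
  destruct (Hj _ _ E) as [E1|E1].
  - apply Hng; symmetry; exact E1.
  - apply Hhb. apply NM_ext; extensionality p; simpl.
    pose proof (f_equal (fun z => nmf z p) E1) as E2; simpl in E2.
    pose proof (f_equal (fun z => nmf z p) Hh) as E3; simpl in E3.
    rewrite le_pw in Hle; specialize (Hle p).
    pose proof (nmf_01 n h p). pose proof (nmf_01 n g p).
    unfold nm_and, nm_prod, nm_imp, Rmax, Rmin in *; rcase.
Qed.

Lemma chain n (g h1 h2 : NM n) : join_irreducible g -> idempotent h1 -> idempotent h2 ->
  NM_le h1 g -> NM_le h2 g -> NM_le h1 h2 \/ NM_le h2 h1.
Proof.
  intros [_ Hj] I1 I2 L1 L2.
  assert (E : g = NM_join (NM_meet g (NM_imp' h1 h2)) (NM_meet g (NM_imp' h2 h1))).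
  { apply NM_ext; extensionality p; simpl. pose proof (nmf_01 n g p).
    pose proof (nmf_01 n h1 p). pose proof (nmf_01 n h2 p).
    unfold nm_or, nm_and, nm_imp, Rmax, Rmin; rcase. }
  rewrite le_pw in L1, L2.
  destruct (Hj _ _ E) as [E1|E1]; [left|right]; apply le_pw; intros p;
    pose proof (f_equal (fun z => nmf z p) E1) as E2; simpl in E2;
    pose proof (f_equal (fun z => nmf z p) I1) as E3; simpl in E3;
    pose proof (f_equal (fun z => nmf z p) I2) as E4; simpl in E4;
    specialize (L1 p); specialize (L2 p);
    pose proof (nmf_01 n g p); pose proof (nmf_01 n h1 p); pose proof (nmf_01 n h2 p);
    unfold nm_and, nm_prod, nm_imp, Rmax, Rmin in *; rcase.
Qed.

Lemma exists_min n (x : NM n) : forall y, idem_ji y -> NM_le y x ->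
  exists h, min_idem_ji h /\ NM_le h x.
Proof.
  intros y; pattern y; apply NM_ind; clear y. intros y IH Hy Hyx.
  destruct (classic (min_idem_ji y)) as [Hm|Hm]; [exists y; auto|].
  unfold min_idem_ji in Hm. apply not_and_or in Hm; destruct Hm as [Hm|Hm]; [contradiction|].
  apply not_all_ex_not in Hm; destruct Hm as [h Hh].
  apply imply_to_and in Hh; destruct Hh as [Hh1 Hh].
  apply imply_to_and in Hh; destruct Hh as [Hh2 Hh3].
  apply (IH h); [split; auto | auto | eapply le_trans; eauto].
Qed.

Lemma filter_part {A : Type} (f : A -> bool) l :
  (length (filter f l) + length (filter (fun a => negb (f a)) l) = length l)%nat.
Proof. induction l as [|a l IH]; simpl; [lia|]. destruct (f a); simpl; lia. Qed.

Lemma le_meet n (g y z : NM n) : NM_le g (NM_meet y z) <-> NM_le g y /\ NM_le g z.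
Proof.
  rewrite !le_pw; split.
  - intros H; split; intros p; specialize (H p); simpl in H; unfold nm_and, Rmin in H; rcase.
  - intros [H1 H2] p; specialize (H1 p); specialize (H2 p); simpl; unfold nm_and, Rmin; rcase.
Qed.

Lemma le_join_l n (y z : NM n) : NM_le y (NM_join y z).
Proof. apply le_pw; intros p; simpl; unfold nm_or, Rmax; rcase. Qed.
Lemma le_join_r n (y z : NM n) : NM_le z (NM_join y z).
Proof. apply le_pw; intros p; simpl; unfold nm_or, Rmax; rcase. Qed.

Theorem lemma3 (n : nat) (Hn : (1 <= n)%nat) (chi : NM n -> R)
  (Hchi : is_chi_plus chi) (x : NM n) :
  exists l : list (NM n),
    NoDup l /\
    (forall g : NM n, In g l <-> (min_idem_ji g /\ NM_le g x)) /\
    chi x = INR (length l).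
Proof.
  destruct Hchi as [Hval [Hbot Hji]].
  revert x. apply NM_ind. intros x IH.
  destruct (classic (x = NM_bot n)) as [Hb|Hnb].
  { subst; exists []; split; [constructor|split]; [|simpl; rewrite Hbot; reflexivity].
    intros g; simpl; split; [tauto|]. intros [[[_ [Hg _]] _] Hle]. apply Hg.
    apply NM_ext; extensionality p. rewrite le_pw in Hle; specialize (Hle p).
    pose proof (nmf_01 n g p). simpl in *; lra. }
  destruct (classic (join_irreducible x)) as [Hj|Hnj].
  - destruct (Hji x Hj) as [Hc1 Hc0]. destruct (classic (idempotent x)) as [Hi|Hni].
    + destruct (exists_min n x x (conj Hi Hj) (le_refl n x)) as [h [Hh Hhx]].
      exists [h]. split; [constructor; [simpl; tauto|constructor]|split].
      * intros g; simpl; split.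
        -- intros [<-|[]]; auto.
        -- intros [Hg Hgx]. left.
           destruct (chain n x h g Hj (proj1 (proj1 Hh)) (proj1 (proj1 Hg)) Hhx Hgx) as [L|L].
           ++ apply (proj2 Hg h (proj1 Hh) L).
           ++ symmetry; apply (proj2 Hh g (proj1 Hg) L).
      * rewrite (Hc1 Hi); simpl; reflexivity.
    + exists []. split; [constructor|split].
      * intros g; simpl; split; [tauto|]. intros [Hg Hgx]. exact (S1 n x g Hj Hni (proj1 Hg) Hgx).
      * rewrite (Hc0 Hni); reflexivity.
  - unfold join_irreducible in Hnj. apply not_and_or in Hnj; destruct Hnj as [Hnj|Hnj]; [contradiction|].
    apply not_all_ex_not in Hnj; destruct Hnj as [y Hnj].
    apply not_all_ex_not in Hnj; destruct Hnj as [z Hnj].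
    apply imply_to_and in Hnj; destruct Hnj as [Hxyz Hnj]. apply not_or_and in Hnj; destruct Hnj as [Ny Nz].
    assert (Ly : lt_NM n y x) by (split; [rewrite Hxyz; apply le_join_l | intros E; apply Ny; auto]).
    assert (Lz : lt_NM n z x) by (split; [rewrite Hxyz; apply le_join_r | intros E; apply Nz; auto]).
    assert (Lw : lt_NM n (NM_meet y z) x).
    { split.
      - eapply le_trans; [apply (proj1 (proj1 (le_meet n _ y z) (le_refl n _)))|apply (proj1 Ly)].
      - intros E. apply Ny. apply le_antisym; [|apply (proj1 Ly)].
        rewrite <- E at 1. apply (proj1 (proj1 (le_meet n _ y z) (le_refl n _))). }
    destruct (IH y Ly) as [ly [Dy [My Cy]]].
    destruct (IH z Lz) as [lz [Dz [Mz Cz]]].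
    destruct (IH _ Lw) as [lw [Dw [Mw Cw]]].
    set (inb := fun g => if excluded_middle_informative (In g ly) then true else false).
    assert (Hinb : forall g, inb g = true <-> In g ly).
    { intros g; unfold inb; destruct excluded_middle_informative; split; auto; discriminate. }
    exists (ly ++ filter (fun g => negb (inb g)) lz).
    split; [|split].
    + apply NoDup_app; auto. apply NoDup_filter; auto.
      intros a Ha Ha'. apply filter_In in Ha'. destruct Ha' as [_ Ha'].
      apply (proj2 (Hinb a)) in Ha. rewrite Ha in Ha'. discriminate.
    + intros g. rewrite in_app_iff, filter_In. split.
      * intros [H|[H _]].
        -- apply My in H; destruct H as [H1 H2]; split; auto; eapply le_trans; [apply H2|apply (proj1 Ly)].
        -- apply Mz in H; destruct H as [H1 H2]; split; auto; eapply le_trans; [apply H2|apply (proj1 Lz)].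
      * intros [H1 H2]. rewrite Hxyz in H2. destruct (ji_prime n g y z (proj2 (proj1 H1)) H2) as [G|G].
        -- left; apply My; auto.
        -- destruct (classic (In g ly)) as [I|I]; [left; auto|right; split; [apply Mz; auto|]].
           destruct (inb g) eqn:E; auto. apply Hinb in E; contradiction.
    + pose proof (Hval y z) as V. rewrite <- Hxyz in V.
      pose proof (filter_part inb lz) as P.
      assert (Eq : length (filter inb lz) = length lw).
      { apply Nat.le_antisymm; apply NoDup_incl_length; auto; [apply NoDup_filter; auto| |].
        - intros g Hg. apply filter_In in Hg; destruct Hg as [Hg1 Hg2]. apply Hinb in Hg2.
          apply Mw. apply My in Hg2; apply Mz in Hg1. split; [apply Hg1|]. apply le_meet; split; [apply Hg2|apply Hg1].
        - intros g Hg. apply Mw in Hg. destruct Hg as [Hg1 Hg2]. apply le_meet in Hg2.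
          apply filter_In; split; [apply Mz; split; [apply Hg1|apply Hg2]|apply Hinb; apply My; split; [apply Hg1|apply Hg2]]. }
      rewrite length_app.
      assert (INR (length lz) = INR (length (filter inb lz)) + INR (length (filter (fun a => negb (inb a)) lz))) as P2
        by (rewrite <- plus_INR, P; reflexivity).
      rewrite plus_INR. rewrite Eq in P2. lra.
Qed.
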